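(* Let $p = 2^n$ and let $f, g$ be univariate polynomials over a ring, each of degree $p-1$. Consider computing (part of) the product $f g$ by the clipped Karatsuba method described in the context, recursing down to single coefficients. Let $\ell$ be a natural number with $2^\ell < p$. If only the top $1/2^\ell$ fraction of the coefficients of $fg$ is required (equivalently, if only the bottom $1/2^\ell$ fraction is required), then the number of coefficient multiplications required is at most $K(p)/3^{\ell-1}$, where $K(p) = p^{\log_2 3}$ is the number of coefficient multiplications used by full (unclipped) Karatsuba multiplication of two polynomials with $p$ coefficients.
   Context: Karatsuba multiplication: for $f, g$ with $p$ coefficients ($p$ even), write $f = f_h x^{p/2} + f_l$, $g = g_h x^{p/2} + g_l$ with $f_h,f_l,g_h,g_l$ having $p/2$ coefficients, and put $f_m = f_h + f_l$, $g_m = g_h + g_l$. Then $fg = z_h x^p + z_m x^{p/2} + z_l$ with $z_h = f_h g_h$, $z_l = f_l g_l$, $z_m = f_m g_m - f_h g_h - f_l g_l$; the three products $f_h g_h$, $f_m g_m$, $f_l g_l$ are computed recursively, and a product of two one-coefficient polynomials costs one coefficient multiplication. Thus $K(1)=1$, $K(p) = 3K(p/2)$, so $K(p)=p^{\log_2 3}=3^n$. Clipped Karatsuba: when only a specified range of coefficients of $fg$ is required, only those of the three sub-products $f_hg_h$, $f_mg_m$, $f_lg_l$ (and only those of their coefficients) that are needed to form the required coefficients of $fg$ are computed, each again by clipped Karatsuba recursively; sub-products that are not needed are not computed at all. *)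

(* Defs.v *)
From mathcomp Require Import all_boot.
Set Implicit Arguments. Unset Strict Implicit. Unset Printing Implicit Defensive.

(* Cost model of clipped Karatsuba.
   [kara_cost n S] = number of coefficient multiplications performed by
   clipped Karatsuba when multiplying two polynomials with 2^n coefficients
   and only the coefficients of the product (indices 0 .. 2^(n+1)-2) lying
   in S are required.  With h = 2^(n-1), fg = z_h x^(2h) + z_m x^h + z_l,
   coefficient k of fg needs z_l[k], z_m[k-h], z_h[k-2h] (when in range),
   and z_m[j] = (f_m g_m)[j] - (f_h g_h)[j] - (f_l g_l)[j].
   Sub-products with no required coefficient cost 0 (are not computed). *)
Fixpoint kara_cost (n : nat) (S : pred nat) : nat :=
  match n with
  | 0 => S 0
  | m.+1 =>
    let h := 2 ^ m in
    let Sm := fun k => (k < h.*2.-1) && S (k + h) in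
    let Sl := fun k => ((k < h.*2.-1) && S k) || Sm k in
    let Sh := fun k => ((k < h.*2.-1) && S (k + h.*2)) || Sm k in
    kara_cost m Sl + kara_cost m Sm + kara_cost m Sh
  end.

(* full Karatsuba cost K(2^n) = 3^n *)
Definition K (n : nat) : nat := 3 ^ n.

(* Main.v *)
Require Import Defs.
From mathcomp Require Import all_boot.
From mathcomp Require Import zify.

Lemma cost_mono n (S S' : pred nat) :
  (forall k, S k -> S' k) -> kara_cost n S <= kara_cost n S'.
Proof.
elim: n S S' => [|m IH] S S' H /=.
  by case E: (S 0); rewrite // (H 0 E).
apply: leq_add; first apply: leq_add; apply: IH => k /=.
- case/orP => /andP[a b]; by rewrite a (H _ b) ?orbT.
- by case/andP => a b; rewrite a (H _ b).
- case/orP => /andP[a b]; by rewrite a (H _ b) ?orbT.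
Qed.

Lemma cost_le3 n (S : pred nat) : kara_cost n S <= 3 ^ n.
Proof.
elim: n S => [|m IH] S /=; first by case: (S 0).
apply: leq_trans (leq_add (leq_add (IH _) (IH _)) (IH _)) _.
rewrite expnS; lia.
Qed.

Lemma cost0 n (S : pred nat) : (forall k, ~~ S k) -> kara_cost n S = 0.
Proof.
elim: n S => [|m IH] S H /=; first by rewrite (negbTE (H 0)).
by rewrite !IH // => k; rewrite !(negbTE (H _)) !andbF.
Qed.

Lemma bot n j : j <= n -> kara_cost n (fun k => k < 2 ^ j) <= 3 ^ j.
Proof.
elim: n j => [|m IH] j hj.
  by move: hj; rewrite leqn0 => /eqP ->.
rewrite /=.
case: (ltnP m j) => hmj.
  have ej : j = m.+1 by lia.
  subst j.
  apply: (@leq_trans (3 ^ m + 3 ^ m + 3 ^ m)); last by rewrite expnS; lia.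
  apply: leq_add; first apply: leq_add.
  - exact: cost_le3.
  - apply: leq_trans (IH m (leqnn m)); apply: cost_mono => k /andP[a b].
    move: a b; rewrite expnS; lia.
  - apply: leq_trans (IH m (leqnn m)); apply: cost_mono => k.
    case/orP => /andP[a b]; move: a b; rewrite expnS; lia.
have h2 : 2 ^ j <= 2 ^ m by apply: leq_pexp2l.
rewrite -[X in _ <= X]addn0 -[X in _ <= X]addn0.
apply: leq_add; first apply: leq_add.
- apply: leq_trans (IH j hmj).
  apply: cost_mono => k /orP[] /andP[a b] //; lia.
- rewrite leqn0; apply/eqP/cost0 => k; apply/negP => /andP[a b]; lia.
- rewrite leqn0; apply/eqP/cost0 => k; apply/negP => /orP[] /andP[a b]; lia.
Qed.

Lemma top n j : j <= n ->
  kara_cost n (fun k => ((2 ^ n.+1).-1 - 2 ^ j <= k) && (k < (2 ^ n.+1).-1)) <= 3 ^ j.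
Proof.
elim: n j => [|m IH] j hj.
  move: hj; rewrite leqn0 => /eqP -> /=.
  by [].
rewrite /=.
have e1 : 2 ^ m.+2 = (2 ^ m).*2.*2 by rewrite !expnS; lia.
have e2 : 2 ^ m.+1 = (2 ^ m).*2 by rewrite !expnS; lia.
have hp : 0 < 2 ^ m by rewrite expn_gt0.
case: (ltnP m j) => hmj.
  have ej : j = m.+1 by lia.
  subst j.
  apply: (@leq_trans (3 ^ m + 3 ^ m + 3 ^ m)); last by rewrite expnS; lia.
  apply: leq_add; first apply: leq_add.
  - exact: cost_le3.
  - apply: leq_trans (IH m (leqnn m)); apply: cost_mono => k /andP[a /andP[b c]].
    move: a b c; rewrite ?e1 ?e2. lia.
  - exact: cost_le3.
have h2 : 2 ^ j <= 2 ^ m by apply: leq_pexp2l.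
rewrite (_ : 3 ^ j = 0 + 0 + 3 ^ j) //.
apply: leq_add; first apply: leq_add.
- rewrite leqn0; apply/eqP/cost0 => k; apply/negP => /orP[] /andP[a /andP[b c]];
    move: a b c; rewrite ?e1 ?e2; lia.
- rewrite leqn0; apply/eqP/cost0 => k; apply/negP => /andP[a /andP[b c]];
    move: a b c; rewrite ?e1 ?e2; lia.
- apply: leq_trans (IH j hmj).
  apply: cost_mono => k /orP[] /andP[a /andP[b c]]; move: a b c; rewrite ?e1 ?e2; lia.
Qed.

Theorem theorem1 (n l : nat) (hl : 2 ^ l < 2 ^ n) :
  let p := 2 ^ n in
  let t := 2 ^ n.+1 %/ 2 ^ l in
  (* top 1/2^l fraction: the t highest coefficients of fg (indices < 2p-1) *)
  kara_cost n (fun k => (p.*2.-1 - t <= k) && (k < p.*2.-1)) * 3 ^ l <= K n * 3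
  /\
  (* bottom 1/2^l fraction: the t lowest coefficients *)
  kara_cost n (fun k => k < t) * 3 ^ l <= K n * 3.
Proof.
move=> p t.
case: (posnP l) => [->|l0].
  rewrite /K expn0 !muln1; split; apply: leq_trans (cost_le3 _ _) _; lia.
have hln : l < n by rewrite -(ltn_exp2l _ _ (isT : 1 < 2)).
have et : t = 2 ^ (n.+1 - l).
  have hs : n.+1 = (n.+1 - l) + l by lia.
  by rewrite /t {1}hs expnD mulnK ?expn_gt0.
have ep : p.*2 = 2 ^ n.+1 by rewrite /p expnS mul2n.
have e3 : K n * 3 = 3 ^ (n.+1 - l) * 3 ^ l.
  by rewrite /K -expnD subnK ?expnS 1?mulnC //; lia.
rewrite e3 et ep; split; apply: leq_mul => //.
  by apply: top; lia.
by apply: bot; lia.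
Qed.
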